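(* Let $G$ be an arbitrary graph and let the buyers' values be i.i.d. uniform on $[0,1]$. Then $$\inf_{\mathbf{T}\in\mathcal{N}_{(1/2)\cdot\mathbf{1}}}\mathcal{R}\big(\tfrac12\cdot\mathbf{1},\mathbf{T}\big)\ \ge\ \frac{e}{4}\cdot\sup_{p>0}\ \inf_{\mathbf{T}\in\mathcal{N}_{p\cdot\mathbf{1}}}\mathcal{R}(p\cdot\mathbf{1},\mathbf{T}).$$
   Context: Public-goods pricing game: $n$ buyers are the vertices of an undirected graph $G=([n],E)$; $N(i)=\{j:(i,j)\in E\}$ (so $i\notin N(i)$). Values i.i.d. uniform on $[0,1]$, $F(x)=\min\{1,x\}$ for $x\ge0$, $F(\infty)=1$. An equilibrium for price vector $\mathbf{p}$ is $\mathbf{T}\in[0,\infty]^n$ (buyer $i$ purchases iff $v_i\ge T_i$) with $T_i=p_i/\prod_{j\in N(i)}F(T_j)$ for all $i$ (convention $c/0=\infty$); $\mathcal{N}_{\mathbf{p}}$ is the set of equilibria; $\mathcal{R}(\mathbf{p},\mathbf{T})=\sum_ip_i(1-F(T_i))$; $p\cdot\mathbf{1}$ is the uniform price vector. *)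

(* Defs.v *)
From Stdlib Require Import Reals Lra.
Open Scope R_scope.

(* Extended nonnegative thresholds: [0, oo]. *)
Inductive ext : Type := Fin (x : R) | Infty.

(* CDF of Uniform[0,1]: F(x) = min{1,x} for x >= 0, F(oo) = 1. *)
Definition F (t : ext) : R :=
  match t with Fin x => Rmin 1 x | Infty => 1 end.

Definition ediv (c d : R) : ext :=
  if Req_EM_T d 0 then Infty else Fin (c / d).

(* A graph on vertex set {0,..,n-1}: adjacency relation adj (assumed symmetric
   and irreflexive in the theorem).  N(i) = { j < n | adj i j }. *)

Fixpoint nbr_prod (adj : nat -> nat -> bool) (T : nat -> ext) (i m : nat) : R :=
  match m with
  | O => 1
  | S m' => nbr_prod adj T i m' * (if adj i m' then F (T m') else 1)
  end.

Definition is_equilibrium (n : nat) (adj : nat -> nat -> bool)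
    (p : nat -> R) (T : nat -> ext) : Prop :=
  forall i, (i < n)%nat ->
    (forall x, T i = Fin x -> 0 <= x) /\
    T i = ediv (p i) (nbr_prod adj T i n).

Fixpoint revenue_aux (p : nat -> R) (T : nat -> ext) (m : nat) : R :=
  match m with
  | O => 0
  | S m' => revenue_aux p T m' + p m' * (1 - F (T m'))
  end.

Definition revenue (n : nat) (p : nat -> R) (T : nat -> ext) : R :=
  revenue_aux p T n.

Definition unif (q : R) : nat -> R := fun _ => q.

(* Main.v *)
Require Import Defs.
From Stdlib Require Import Reals Lra Psatz Lia.

Lemma ln_le' x y : 0 < x -> x <= y -> ln x <= ln y.
Proof. intros Hx [H|H]. left; apply ln_increasing; auto. subst; lra. Qed.

Lemma exp_le' x y : x <= y -> exp x <= exp y.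
Proof. intros [H|H]. left; apply exp_increasing; auto. subst; lra. Qed.

Lemma div_nonneg a b : 0 <= a -> 0 < b -> 0 <= a / b.
Proof. intros; unfold Rdiv; apply Rmult_le_pos; [auto| left; apply Rinv_0_lt_compat; auto]. Qed.

Lemma key (y k : R) : 1/2 <= y <= 1 -> 0 <= k ->
  exp 1 / 4 * (exp (- (k * ln 2)) * (1 - exp (k * ln y))) <= 1/2 * (1 - y).
Proof.
  intros Hy Hk.
  set (L := ln y). set (l2 := ln 2).
  assert (Hl2 : 0 < l2) by (pose proof ln_lt_2; unfold l2; lra).
  assert (HL0 : L <= 0) by (unfold L; rewrite <- ln_1; apply ln_le'; lra).
  assert (HL1 : - l2 <= L).
  { unfold L, l2. rewrite <- ln_Rinv by lra. apply ln_le'; lra. }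
  assert (Hey : exp L = y) by (unfold L; apply exp_ln; lra).
  assert (A : y * (1 - L) <= 1).
  { pose proof (exp_ineq1_le (- L)).
    assert (y * exp (- L) = 1) by (rewrite exp_Ropp, <- Hey; field; apply exp_neq_0).
    nra. }
  assert (B : y * (1 - l2 - L) <= 1/2).
  { pose proof (exp_ineq1_le (- l2 - L)).
    assert (y * exp (- l2 - L) = 1/2).
    { replace (- l2 - L) with (- (l2 + L)) by ring. rewrite exp_Ropp, exp_plus, <- Hey.
      unfold l2; rewrite exp_ln by lra. field; apply exp_neq_0. }
    nra. }
  assert (C : - L <= 2 * l2 * (1 - y)).
  { assert (0 <= (l2 + L) * (1 - y * (1 - L))) by (apply Rmult_le_pos; lra).
    assert (0 <= (- L) * (1/2 - y * (1 - l2 - L))) by (apply Rmult_le_pos; lra).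
    nra. }
  set (p := exp (- (k * l2))).
  assert (Hp : 0 < p) by apply exp_pos.
  assert (E1 : 1 - exp (k * L) <= - (k * L)) by (pose proof (exp_ineq1_le (k * L)); lra).
  assert (E2 : p * (k * l2) <= exp (-1)).
  { pose proof (exp_ineq1_le (k * l2 - 1)).
    assert (p * exp (k * l2 - 1) = exp (-1)) by (unfold p; rewrite <- exp_plus; f_equal; ring).
    nra. }
  assert (E3 : exp 1 * exp (-1) = 1) by (rewrite <- exp_plus; replace (1 + -1) with 0 by ring; apply exp_0).
  assert (He : 0 < exp 1) by apply exp_pos.
  assert (F1 : p * (1 - exp (k * L)) <= p * (- (k * L))) by (apply Rmult_le_compat_l; lra).
  assert (F2 : l2 * (p * (- (k * L))) <= exp (-1) * (- L)).
  { replace (l2 * (p * (- (k * L)))) with ((p * (k * l2)) * (- L)) by ring.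
    apply Rmult_le_compat_r; lra. }
  assert (F3 : l2 * (exp 1 / 4 * (p * (1 - exp (k * L)))) <= l2 * (1/2 * (1 - y))).
  { apply Rle_trans with (exp 1 / 4 * (exp (-1) * (- L))).
    - replace (l2 * (exp 1 / 4 * (p * (1 - exp (k * L))))) with (exp 1 / 4 * (l2 * (p * (1 - exp (k * L))))) by ring.
      apply Rmult_le_compat_l; [lra|]. nra.
    - replace (exp 1 / 4 * (exp (-1) * - L)) with ((exp 1 * exp (-1)) * (- L) / 4) by field.
      rewrite E3. nra. }
  apply Rmult_le_reg_l with l2; auto.
Qed.

Lemma F_le1 t : F t <= 1.
Proof. destruct t; simpl; [apply Rmin_l | lra]. Qed.

Lemma prod_bounds adj T i m : (forall j, (j < m)%nat -> 0 <= F (T j) <= 1) ->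
  0 <= nbr_prod adj T i m <= 1.
Proof.
  induction m; intros H; simpl; [lra|].
  assert (IH := IHm (fun j Hj => H j ltac:(lia))).
  specialize (H m ltac:(lia)).
  destruct (adj i m); nra.
Qed.

Lemma prod_pos adj T i m : (forall j, (j < m)%nat -> 0 < F (T j)) ->
  0 < nbr_prod adj T i m.
Proof.
  induction m; intros H; simpl; [lra|].
  assert (IH := IHm (fun j Hj => H j ltac:(lia))).
  specialize (H m ltac:(lia)).
  destruct (adj i m); nra.
Qed.

Lemma prod_ext adj T1 T2 i m : (forall j, (j < m)%nat -> F (T1 j) = F (T2 j)) ->
  nbr_prod adj T1 i m = nbr_prod adj T2 i m.
Proof.
  induction m; intros H; simpl; [lra|].
  rewrite (IHm (fun j Hj => H j ltac:(lia))), (H m ltac:(lia)). reflexivity.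
Qed.

Lemma prod_one adj T i m : (forall j, (j < m)%nat -> F (T j) = 1) ->
  nbr_prod adj T i m = 1.
Proof.
  induction m; intros H; simpl; [lra|].
  rewrite (IHm (fun j Hj => H j ltac:(lia))), (H m ltac:(lia)).
  destruct (adj i m); ring.
Qed.

Lemma prod_pow adj T i m k : 0 <= k ->
  (forall j, (j < m)%nat -> 0 < F (T j) <= 1) ->
  nbr_prod adj (fun j => Fin (exp (k * ln (F (T j))))) i m
  = exp (k * ln (nbr_prod adj T i m)).
Proof.
  intros Hk; induction m; intros H; simpl.
  - rewrite ln_1, Rmult_0_r, exp_0; reflexivity.
  - rewrite (IHm (fun j Hj => H j ltac:(lia))).
    assert (Hp := prod_pos adj T i m (fun j Hj => proj1 (H j ltac:(lia)))).
    specialize (H m ltac:(lia)).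
    assert (Hle : exp (k * ln (F (T m))) <= 1).
    { rewrite <- exp_0. apply exp_le'.
      assert (ln (F (T m)) <= 0) by (rewrite <- ln_1; apply ln_le'; lra). nra. }
    destruct (adj i m).
    + rewrite Rmin_right by lra. rewrite ln_mult by lra. rewrite <- exp_plus. f_equal; ring.
    + rewrite !Rmult_1_r. reflexivity.
Qed.

Lemma rev_le c p q T T' m :
  (forall i, (i < m)%nat -> c * (p i * (1 - F (T i))) <= q i * (1 - F (T' i))) ->
  c * revenue_aux p T m <= revenue_aux q T' m.
Proof.
  induction m; intros H; simpl; [lra|].
  assert (IH := IHm (fun j Hj => H j ltac:(lia))).
  specialize (H m ltac:(lia)). lra.
Qed.

Lemma rev_nonneg q T m : 0 <= q -> 0 <= revenue_aux (unif q) T m.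
Proof.
  induction m; intros H; simpl; [lra|].
  pose proof (F_le1 (T m)). specialize (IHm H). change (unif q m) with q. nra.
Qed.

Theorem theorem4p6 (n : nat) (adj : nat -> nat -> bool)
  (Hsym : forall i j, adj i j = adj j i)
  (Hirr : forall i, adj i i = false) :
  forall T' : nat -> ext, is_equilibrium n adj (unif (1/2)) T' ->
  forall p : R, 0 < p ->
  forall eps : R, 0 < eps ->
  exists T : nat -> ext, is_equilibrium n adj (unif p) T /\
    exp 1 / 4 * revenue n (unif p) T <= revenue n (unif (1/2)) T' + eps.
Proof.
  intros T' HT' p Hp eps Heps.
  assert (Hrev' : 0 <= revenue n (unif (1/2)) T') by (apply rev_nonneg; lra).
  destruct (Rle_lt_dec 1 p) as [Hp1|Hp1].
  - exists (fun _ => Fin p). split.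
    + intros i Hi. split; [intros x Hx; inversion Hx; lra|].
      rewrite prod_one by (intros j _; simpl; apply Rmin_left; lra).
      unfold ediv; destruct (Req_EM_T 1 0); [lra|]. f_equal; unfold unif; field.
    + assert (revenue n (unif p) (fun _ => Fin p) = 0).
      { unfold revenue. generalize n; induction n0; simpl; [reflexivity|].
        rewrite IHn0, Rmin_left by lra. ring. }
      rewrite H. lra.
  -
    assert (H01 : forall j, (j < n)%nat -> 0 <= F (T' j) <= 1).
    { intros j Hj. split; [|apply F_le1]. destruct (T' j) eqn:E; simpl; [|lra].
      apply Rmin_glb; [lra|]. apply (proj1 (HT' j Hj)); auto. }
    assert (Hhalf : forall j, (j < n)%nat -> 1/2 <= F (T' j) <= 1).
    { intros j Hj. split; [|apply F_le1].
      destruct (HT' j Hj) as [_ E]. rewrite E.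
      pose proof (prod_bounds adj T' j n H01).
      unfold ediv; destruct (Req_EM_T (nbr_prod adj T' j n) 0); simpl; [lra|].
      apply Rmin_glb; [lra|]. unfold unif.
      apply Rmult_le_reg_r with (nbr_prod adj T' j n); [lra|].
      field_simplify; lra. }
    set (k := - ln p / ln 2).
    assert (Hl2 : 0 < ln 2) by (pose proof ln_lt_2; lra).
    assert (Hk : 0 <= k).
    { unfold k. assert (ln p < 0) by (rewrite <- ln_1; apply ln_increasing; lra).
      apply div_nonneg; lra. }
    assert (Hpk : exp (- (k * ln 2)) = p).
    { unfold k. replace (- (- ln p / ln 2 * ln 2)) with (ln p) by (field; lra).
      apply exp_ln; lra. }
    set (X := fun j => Fin (exp (k * ln (F (T' j))))).
    set (T := fun i => Fin (p / nbr_prod adj X i n)).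
    assert (HFpos : forall j, (j < n)%nat -> 0 < F (T' j) <= 1)
      by (intros j Hj; specialize (Hhalf j Hj); lra).
    assert (HX : forall i, (i < n)%nat -> nbr_prod adj X i n = exp (k * ln (nbr_prod adj T' i n)))
      by (intros i Hi; apply prod_pow; auto).
    assert (HFT : forall i, (i < n)%nat -> F (T i) = exp (k * ln (F (T' i)))).
    { intros i Hi. unfold T; simpl. rewrite HX by auto.
      set (D := nbr_prod adj T' i n).
      assert (HD : 0 < D <= 1).
      { split; [apply prod_pos; intros; apply HFpos; auto | apply prod_bounds; auto]. }
      destruct (HT' i Hi) as [_ E]. rewrite E. unfold ediv.
      destruct (Req_EM_T (nbr_prod adj T' i n) 0) as [E0|E0]; [fold D in E0; lra|].
      fold D. simpl. unfold unif.
      destruct (Rle_lt_dec D (1/2)) as [HD2|HD2].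
      + rewrite (Rmin_left 1 (1/2/D)).
        2:{ apply Rmult_le_reg_r with D; [lra|]. field_simplify; lra. }
        rewrite ln_1, Rmult_0_r, exp_0.
        apply Rmin_left.
        assert (exp (k * ln D) <= p).
        { rewrite <- Hpk. assert (ln D <= ln (/2)) by (apply ln_le'; lra).
          rewrite ln_Rinv in H by lra.
          destruct (Rle_lt_or_eq_dec _ _ (Rmult_le_compat_l k _ _ Hk H)) as [H'|H'].
          - left; apply exp_increasing; lra.
          - right; f_equal; lra. }
        pose proof (exp_pos (k * ln D)).
        apply Rmult_le_reg_r with (exp (k * ln D)); [lra|]. field_simplify; lra.
      + assert (Hr : 1/2/D < 1) by (apply Rmult_lt_reg_r with D; [lra|]; field_simplify; lra).
        rewrite (Rmin_right 1 (1/2/D)) by lra.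
        assert (E2 : exp (k * ln (1/2/D)) = p / exp (k * ln D)).
        { rewrite <- Hpk. replace (1/2/D) with (/ (2 * D)) by (field; lra).
          rewrite ln_Rinv, ln_mult by lra.
          replace (k * - (ln 2 + ln D)) with (- (k * ln 2) + - (k * ln D)) by ring.
          rewrite exp_plus, (exp_Ropp (k * ln D)). field; apply exp_neq_0. }
        rewrite <- E2. apply Rmin_right.
        apply Rle_trans with (exp 0); [|rewrite exp_0; lra]. apply exp_le'.
        assert (0 < 1/2/D) by (unfold Rdiv; apply Rmult_lt_0_compat; [lra| apply Rinv_0_lt_compat; lra]).
        assert (ln (1/2/D) <= 0) by (rewrite <- ln_1; apply ln_le'; lra).
        nra. }
    exists T. split.
    + intros i Hi. split.
      * intros x Hx. unfold T in Hx. inversion Hx.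
        rewrite HX by auto. pose proof (exp_pos (k * ln (nbr_prod adj T' i n))).
        apply div_nonneg; lra.
      * rewrite (prod_ext adj T X i n).
        2:{ intros j Hj. rewrite HFT by auto. unfold X; simpl.
            symmetry. apply Rmin_right.
            apply Rle_trans with (exp 0); [|rewrite exp_0; lra].
            specialize (HFpos j Hj). apply exp_le'.
            assert (ln (F (T' j)) <= 0) by (rewrite <- ln_1; apply ln_le'; lra). nra. }
        unfold ediv. rewrite HX by auto.
        destruct (Req_EM_T _ 0) as [E|E]; [pose proof (exp_pos (k * ln (nbr_prod adj T' i n))); lra|].
        unfold T, unif. rewrite HX by auto. reflexivity.
    + assert (exp 1 / 4 * revenue n (unif p) T <= revenue n (unif (1/2)) T'); [|lra].
      apply rev_le. intros i Hi. rewrite HFT by auto. unfold unif.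
      rewrite <- Hpk. apply key; auto.
Qed.
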